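(* If $G=(V,E)$ is a finite bipartite graph, then with $\mathbf{x}(z)$ defined from the LABP limits as below, $$\lim_{z\to\infty}\sum_{e\in E}x_e(z)=\nu(G)=\tau(G),$$ i.e. LABP computes the matching number, which equals the vertex cover number.
   Context: $\vec E$ denotes the directed edges of $G$, $\partial u$ the neighbours of $u$, empty sums are $0$. LABP: $m^0_{\vec e}(z)=0$, $m^{t+1}_{u\to v}(z)=z/(1+\sum_{w\in\partial u\setminus v}m^t_{w\to u}(z))$; $Y_{\vec e}(z)=\lim_t m^t_{\vec e}(z)$; $x_e(z)=Y_{\vec e}(z)Y_{-\vec e}(z)/(z+Y_{\vec e}(z)Y_{-\vec e}(z))$ for either orientation $\vec e$ of $e$. $\nu(G)$ is the maximum size of a matching and $\tau(G)$ the minimum size of a vertex cover. *)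

(* Defs.v *)
From mathcomp Require Import all_boot.
From Stdlib Require Import Reals.
Set Implicit Arguments. Unset Strict Implicit. Unset Printing Implicit Defensive.

Definition simple_graph (V : finType) (E : {set {set V}}) : Prop :=
  forall e, e \in E -> #|e| = 2.

Definition bipartite (V : finType) (E : {set {set V}}) : Prop :=
  exists A : {set V}, forall e, e \in E -> #|e :&: A| = 1.

Definition nbr (V : finType) (E : {set {set V}}) (u : V) : {set V} :=
  [set w | [set u; w] \in E].

Fixpoint labp (V : finType) (E : {set {set V}}) (z : R) (t : nat) (u v : V) : R :=
  match t with
  | O => 0%R
  | S t' => (z / (1 + \big[Rplus/0%R]_(w in nbr E u :\ v) labp E z t' w u))%R
  end.

(* x_e(z) computed from the limits Y (Y u v z = Y_{u->v}(z)), using one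
   orientation of e (the formula is symmetric in the orientation). *)
Definition xval (V : finType) (Y : V -> V -> R -> R) (z : R) (e : {set V}) : R :=
  match [pick u in e] with
  | Some u =>
      match [pick v in e :\ u] with
      | Some v => (Y u v z * Y v u z / (z + Y u v z * Y v u z))%R
      | None => 0%R
      end
  | None => 0%R
  end.

Definition is_matching (V : finType) (E M : {set {set V}}) : bool :=
  (M \subset E) &&
  [forall e1 in M, forall e2 in M, (e1 != e2) ==> [disjoint e1 & e2]].

Definition is_vertex_cover (V : finType) (E : {set {set V}}) (C : {set V}) : bool :=
  [forall e in E, ~~ [disjoint e & C]].

Definition nu (V : finType) (E : {set {set V}}) : nat :=
  \max_(M : {set {set V}} | is_matching E M) #|M|.

(* vertex cover number tau(G): minimum size of a vertex cover
   (the whole vertex set is a cover, so #|V| is a valid initial bound) *)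
Definition tau (V : finType) (E : {set {set V}}) : nat :=
  \big[minn/#|V|]_(C : {set V} | is_vertex_cover E C) #|C|.

(* Main.v *)
From HB Require Import structures.
Require Import Defs.
From mathcomp Require Import all_boot.
From Stdlib Require Import Reals Lra Lia.
From mathcomp Require Import zify.
Set Implicit Arguments. Unset Strict Implicit. Unset Printing Implicit Defensive.

Lemma Rplus_0_r' : right_id 0%R Rplus. Proof. move=> x; exact: Rplus_0_r. Qed.
Lemma Rplus_0_l' : left_id 0%R Rplus. Proof. move=> x; exact: Rplus_0_l. Qed.
Lemma Rplus_assoc' : associative Rplus. Proof. move=> x y z; by rewrite Rplus_assoc. Qed.
Lemma Rplus_comm' : commutative Rplus. Proof. move=> x y; exact: Rplus_comm. Qed.
HB.instance Definition _ := Monoid.isComLaw.Build R 0%R Rplus Rplus_assoc' Rplus_comm' Rplus_0_l'.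

Section Sums.
Local Open Scope R_scope.

Lemma sumR_le (I : Type) (r : seq I) (P : pred I) (F G : I -> R) :
  (forall i, P i -> F i <= G i) ->
  \big[Rplus/0]_(i <- r | P i) F i <= \big[Rplus/0]_(i <- r | P i) G i.
Proof. move=> H; apply: (big_ind2 (fun a b => a <= b)) => //; [lra|]; move=> *; lra. Qed.

Lemma sumR_ge0 (I : Type) (r : seq I) (P : pred I) (F : I -> R) :
  (forall i, P i -> 0 <= F i) -> 0 <= \big[Rplus/0]_(i <- r | P i) F i.
Proof. move=> H; apply: (big_ind (fun a => 0 <= a)) => //; [lra|]; move=> *; lra. Qed.

Lemma sumR_mull (I : Type) (r : seq I) (P : pred I) (F : I -> R) c :
  \big[Rplus/0]_(i <- r | P i) (c * F i) = c * \big[Rplus/0]_(i <- r | P i) F i.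
Proof.
apply: (big_ind2 (fun a b => a = c * b)) => //; first lra.
by move=> ? ? ? ? -> ->; lra.
Qed.

Lemma sumR_split (I : Type) (r : seq I) (P : pred I) (F G : I -> R) :
  \big[Rplus/0]_(i <- r | P i) (F i + G i) =
  \big[Rplus/0]_(i <- r | P i) F i + \big[Rplus/0]_(i <- r | P i) G i.
Proof. exact: big_split. Qed.

Lemma sumR_opp (I : Type) (r : seq I) (P : pred I) (F : I -> R) :
  \big[Rplus/0]_(i <- r | P i) (- F i) = - \big[Rplus/0]_(i <- r | P i) F i.
Proof.
apply: (big_ind2 (fun a b => a = - b)) => //; first lra.
by move=> ? ? ? ? -> ->; lra.
Qed.

Lemma sumR_sub (I : Type) (r : seq I) (P : pred I) (F G : I -> R) :
  \big[Rplus/0]_(i <- r | P i) (F i - G i) =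
  \big[Rplus/0]_(i <- r | P i) F i - \big[Rplus/0]_(i <- r | P i) G i.
Proof. rewrite /Rminus big_split /= sumR_opp; lra. Qed.

Lemma sumR_const (T : finType) (A : {pred T}) c :
  \big[Rplus/0]_(i in A) c = INR #|A| * c.
Proof.
rewrite big_const; elim: #|A| => [|n IH]; first (simpl; lra).
rewrite [iter _ _ _]/= IH S_INR; lra.
Qed.

Lemma sumR_cv (I : Type) (r : seq I) (P : pred I) (F : nat -> I -> R) (L : I -> R) :
  (forall i, P i -> Un_cv (fun t => F t i) (L i)) ->
  Un_cv (fun t => \big[Rplus/0]_(i <- r | P i) F t i) (\big[Rplus/0]_(i <- r | P i) L i).
Proof.
move=> H; elim: r => [|a r IH].
  rewrite big_nil; move=> e he; exists 0%nat => n _; rewrite big_nil /R_dist Rminus_0_r Rabs_R0; lra.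
rewrite big_cons; case Pa: (P a).
  have := CV_plus _ _ _ _ (H a Pa) IH.
  by apply: Un_cv_ext => n; rewrite big_cons Pa.
by apply: Un_cv_ext IH => n; rewrite big_cons Pa.
Qed.

End Sums.


Section Graph.
Variables (V : finType) (E : {set {set V}}) (Hs : simple_graph E).

Lemma edge_neq u v : [set u; v] \in E -> u != v.
Proof.
move=> /Hs; apply: contra_eqN => /eqP ->; by rewrite setUid cards1.
Qed.

Lemma nbr_sym u v : (v \in nbr E u) = (u \in nbr E v).
Proof. by rewrite !inE setUC. Qed.

Lemma nbr_neq u v : v \in nbr E u -> u != v.
Proof. rewrite inE; exact: edge_neq. Qed.

Lemma edge_at e u : e \in E -> u \in e -> exists2 v, v \in nbr E u & e = [set u; v].
Proof.
move=> eE ue; have /cards2P [a [b [ab ee]]] : #|e| == 2 by rewrite Hs.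
move: ue; rewrite ee !inE => /orP [] /eqP ->.
  by exists b; rewrite // inE -ee.
exists a; first by rewrite inE setUC -ee.
by rewrite setUC.
Qed.

Lemma edges_at u : [set e in E | u \in e] = [set [set u; v] | v in nbr E u].
Proof.
apply/setP => e; rewrite inE; apply/andP/imsetP.
  by move=> [eE ue]; have [v vn ->] := edge_at eE ue; exists v.
by move=> [v vn ->]; split; [move: vn; rewrite inE | rewrite !inE eqxx].

Qed.

Lemma nbr_inj u : {in nbr E u &, injective (fun v => [set u; v])}.
Proof.
move=> v w vn wn /= eq.
have : v \in [set u; w] by rewrite -eq !inE eqxx orbT.
rewrite !inE => /orP [] /eqP // vu.
by move: (nbr_neq vn); rewrite vu eqxx.
Qed.

Lemma sum_at u (G : {set V} -> R) :
  \big[Rplus/0%R]_(e in [set e in E | u \in e]) G e =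
  \big[Rplus/0%R]_(v in nbr E u) G [set u; v].
Proof. by rewrite edges_at big_imset //; apply: nbr_inj. Qed.

Lemma double_count (C : {set V}) (G : V -> {set V} -> R) :
  \big[Rplus/0%R]_(e in E) \big[Rplus/0%R]_(u in e :&: C) G u e =
  \big[Rplus/0%R]_(u in C) \big[Rplus/0%R]_(v in nbr E u) G u [set u; v].
Proof.
rewrite (exchange_big_dep (fun u => u \in C)) /=; last by move=> e u _; rewrite inE => /andP [].
apply: eq_bigr => u uC; rewrite -sum_at; apply: eq_bigl => e.
by rewrite !inE uC andbT.
Qed.

End Graph.


Section RealFacts.
Local Open Scope R_scope.

Lemma ln_le' a b : 0 < a -> a <= b -> ln a <= ln b.
Proof. move=> ha hab; case: (Rle_lt_or_eq_dec _ _ hab) => [h|->]; last lra.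
by apply: Rlt_le; apply: ln_increasing. Qed.

Lemma ln_nonpos a : 0 < a -> a <= 1 -> ln a <= 0.
Proof. move=> ha h1; rewrite -ln_1; exact: ln_le'. Qed.

Lemma xlnx_ge a : 0 < a -> -1 <= a * ln a.
Proof.
move=> ha; have := exp_ineq1_le (- ln a).
rewrite exp_Ropp exp_ln // => h.
have : a * (1 + - ln a) <= a * / a by apply: Rmult_le_compat_l; lra.
rewrite Rinv_r; [nra | lra].
Qed.

Lemma ln_sum (I : Type) (r : seq I) (P : pred I) (f : I -> R) :
  (forall i, P i -> 0 <= f i) ->
  \big[Rplus/0]_(i <- r | P i) f i < 1 ->
  ln (1 - \big[Rplus/0]_(i <- r | P i) f i) <= \big[Rplus/0]_(i <- r | P i) ln (1 - f i).
Proof.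
move=> H.
suff : (fun l s => 0 <= s /\ (s < 1 -> ln (1 - s) <= l))
   (\big[Rplus/0]_(i <- r | P i) ln (1 - f i)) (\big[Rplus/0]_(i <- r | P i) f i).
  by move=> [_ h]; exact: h.
apply: (big_ind2 (fun l s => 0 <= s /\ (s < 1 -> ln (1 - s) <= l))).
- split; first lra. by move=> _; rewrite Rminus_0_r ln_1; lra.
- move=> l1 s1 l2 s2 [h1 k1] [h2 k2]; split; first lra.
  move=> hs; have e1 := k1 ltac:(lra); have e2 := k2 ltac:(lra).
  have : ln (1 - (s1 + s2)) <= ln ((1 - s1) * (1 - s2)).
    apply: ln_le'; nra.
  rewrite ln_mult; lra.
- move=> i Pi; split; first exact: H. lra.
Qed.

Lemma ln_sum_in (T : finType) (A : {set T}) (f : T -> R) :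
  (forall i, i \in A -> 0 <= f i) ->
  \big[Rplus/0]_(i in A) f i < 1 ->
  ln (1 - \big[Rplus/0]_(i in A) f i) <= \big[Rplus/0]_(i in A) ln (1 - f i).
Proof. exact: ln_sum. Qed.

End RealFacts.

Section Bounds.
Local Open Scope R_scope.
Variables (V : finType) (E : {set {set V}}) (Hs : simple_graph E).
Variables (z : R) (q : V -> R) (x : {set V} -> R).
Hypothesis zpos : 0 < z.
Hypothesis Hq : forall u, 0 < q u <= 1.
Hypothesis Hx : forall e, e \in E -> 0 < x e < 1.
Hypothesis Hxq : forall u v, [set u; v] \in E -> x [set u; v] * (1 - x [set u; v]) = z * q u * q v.
Hypothesis Hsum : forall u, \big[Rplus/0]_(v in nbr E u) x [set u; v] = 1 - q u.

Lemma card_cover (C : {set V}) (e : {set V}) : e \in E -> ~~ [disjoint e & C] ->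
  x e <= \big[Rplus/0]_(u in e :&: C) x e.
Proof.
move=> eE; rewrite -setI_eq0 -card_gt0 => h; rewrite sumR_const.
have := Hx eE; have : 1 <= INR #|e :&: C| by apply: (le_INR 1); apply/leP.
nra.
Qed.

Lemma cover_bound (C : {set V}) : is_vertex_cover E C ->
  \big[Rplus/0]_(e in E) x e <= INR #|C|.
Proof.
move=> /forall_inP hC.
apply: Rle_trans (_ : \big[Rplus/0]_(e in E) \big[Rplus/0]_(u in e :&: C) x e <= _).
  by apply: sumR_le => e eE; apply: card_cover => //; apply: hC.
rewrite (double_count Hs C (fun u e => x e)) -[INR #|C|]Rmult_1_r -sumR_const.
apply: sumR_le => u _; rewrite Hsum; have := Hq u; lra.
Qed.


Lemma simple_sub (F : {set {set V}}) : F \subset E -> simple_graph F.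
Proof. by move=> /subsetP sF e /sF /Hs. Qed.

Lemma edge_ln e : e \in E ->
  \big[Rplus/0]_(u in e) ln (q u) = ln (x e) + ln (1 - x e) - ln z.
Proof.
move=> eE; have /cards2P [a [b [ab ee]]] : (#|e| == 2)%nat by rewrite Hs.
rewrite ee big_setU1 ?inE // big_set1.
have := @Hxq a b; rewrite -ee => /(_ eE) h.
have := Hx eE => hx; have := Hq a; have := Hq b => ha hb.
have : ln (x e * (1 - x e)) = ln (z * q a * q b) by rewrite h.
have hza : 0 < z * q a by apply: Rmult_lt_0_compat; lra.
rewrite ln_mult ?ln_mult; try lra.
move=> h2 /=; lra.
Qed.

Lemma twice (F : {set {set V}}) (G : {set V} -> R) : simple_graph F ->
  2 * \big[Rplus/0]_(e in F) G e =
  \big[Rplus/0]_(u in [set: V]) \big[Rplus/0]_(v in nbr F u) G [set u; v].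
Proof.
move=> HF; rewrite -(double_count HF [set: V] (fun u e => G e)) -sumR_mull.
apply: eq_bigr => e eF; rewrite sumR_const setIT HF //=; lra.
Qed.

Lemma SXQ :
  \big[Rplus/0]_(e in E) (x e * \big[Rplus/0]_(u in e) ln (q u)) =
  \big[Rplus/0]_(u in [set: V]) (ln (q u) * (1 - q u)).
Proof.
transitivity (\big[Rplus/0]_(e in E) \big[Rplus/0]_(u in e :&: [set: V]) (x e * ln (q u))).
  by apply: eq_bigr => e _; rewrite setIT sumR_mull.
rewrite (double_count Hs [set: V] (fun u e => x e * ln (q u))).
apply: eq_bigr => u _; rewrite -Hsum -sumR_mull; apply: eq_bigr => v _; lra.
Qed.

Lemma SMQ (M : {set {set V}}) : simple_graph M ->
  \big[Rplus/0]_(e in M) \big[Rplus/0]_(u in e) ln (q u) =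
  \big[Rplus/0]_(u in [set: V]) (ln (q u) * INR #|nbr M u|).
Proof.
move=> HM.
transitivity (\big[Rplus/0]_(e in M) \big[Rplus/0]_(u in e :&: [set: V]) ln (q u)).
  by apply: eq_bigr => e _; rewrite setIT.
rewrite (double_count HM [set: V] (fun u e => ln (q u))).
by apply: eq_bigr => u _; rewrite sumR_const Rmult_comm.
Qed.

Lemma matching_nbr (M : {set {set V}}) u : is_matching E M -> (#|nbr M u| <= 1)%nat.
Proof.
move=> /andP [sME /forall_inP hM]; apply/card_le1_eqP => p p' pn p'n.
apply/eqP/negPn/negP => pp.
have HM := simple_sub sME.
have ne : [set u; p] != [set u; p'].
  apply: contra pp => /eqP h; apply/eqP; symmetry; exact: (nbr_inj HM pn p'n h).
have pM : [set u; p] \in M by move: pn; rewrite inE.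
have p'M : [set u; p'] \in M by move: p'n; rewrite inE.
move: (hM _ pM) => /forall_inP /(_ _ p'M); rewrite ne /=.
by move/disjointFr => /(_ u); rewrite !inE !eqxx => /(_ isT).
Qed.

Lemma vertex_bound (M : {set {set V}}) u : is_matching E M ->
  (1 - INR #|nbr M u|) * ln (q u) <=
  \big[Rplus/0]_(v in nbr E u) ln (1 - x [set u; v]) -
  \big[Rplus/0]_(v in nbr M u) (ln (x [set u; v]) + ln (1 - x [set u; v])).
Proof.
move=> mM; have := matching_nbr u mM; have /andP [sME _] := mM.
have sub : nbr M u \subset nbr E u.
  by apply/subsetP => v; rewrite !inE => /(subsetP sME).
have pos : forall v, v \in nbr E u -> 0 < x [set u; v] < 1.
  by move=> v; rewrite inE => /Hx.
have := Hq u => hq.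
rewrite leq_eqVlt ltnS leqn0 => /orP [] /eqP hk.
- move/eqP: hk; case/cards1P => p hp; rewrite hp big_set1 cards1 /=.
  have pE : p \in nbr E u by apply: (subsetP sub); rewrite hp inE.
  rewrite (big_setD1 _ pE) /=.
  have := Hsum u; rewrite (big_setD1 _ pE) /= => hs.
  have hxp := pos p pE.
  have : ln (1 - \big[Rplus/0]_(v in nbr E u :\ p) x [set u; v])
     <= \big[Rplus/0]_(v in nbr E u :\ p) ln (1 - x [set u; v]).
    apply: ln_sum_in; last lra.
    by move=> v; rewrite inE => /andP [_ vn]; have := pos v vn; lra.
  have : ln (x [set u; p]) <= ln (1 - \big[Rplus/0]_(v in nbr E u :\ p) x [set u; v]).
    apply: ln_le'; lra.
  rewrite Rminus_diag Rmult_0_l; lra.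
- rewrite (cards0_eq hk) big_set0 cards0 /=.
  have := Hsum u => hs.
  have : ln (1 - \big[Rplus/0]_(v in nbr E u) x [set u; v])
     <= \big[Rplus/0]_(v in nbr E u) ln (1 - x [set u; v]).
    apply: ln_sum_in; last lra.
    by move=> v vn; have := pos v vn; lra.
  rewrite hs; have -> : 1 - (1 - q u) = q u by lra.
  lra.
Qed.

Lemma matching_bound (M : {set {set V}}) : is_matching E M ->
  (INR #|M| - \big[Rplus/0]_(e in E) x e) * ln z <= INR #|E| + INR #|V|.
Proof.
move=> mM; have /andP [sME _] := mM; have HM := simple_sub sME.
set L := ln z.
set SX := \big[Rplus/0]_(e in E) x e.
set SXL := \big[Rplus/0]_(e in E) (x e * (ln (x e) + ln (1 - x e))).
set SXQ' := \big[Rplus/0]_(e in E) (x e * \big[Rplus/0]_(u in e) ln (q u)).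
set SML := \big[Rplus/0]_(e in M) (ln (x e) + ln (1 - x e)).
set SMQ' := \big[Rplus/0]_(e in M) \big[Rplus/0]_(u in e) ln (q u).
set SL1 := \big[Rplus/0]_(e in E) ln (1 - x e).
have e1 : SX * L = SXL - SXQ'.
  rewrite /SX /SXL /SXQ' -sumR_sub Rmult_comm -sumR_mull; apply: eq_bigr => e eE.
  rewrite edge_ln // /L; ring.
have e2 : INR #|M| * L = SML - SMQ'.
  rewrite /SML /SMQ' -sumR_sub -sumR_const; apply: eq_bigr => e eM.
  rewrite edge_ln ?(subsetP sME) // /L; ring.
have e3 : - INR #|E| + SL1 <= SXL.
  rewrite /SL1 /SXL -[INR #|E|]Rmult_1_r -sumR_const -sumR_opp -sumR_split.
  apply: sumR_le => e eE; have := Hx eE => hx.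
  have := xlnx_ge (proj1 hx); have := ln_nonpos (a := 1 - x e) ltac:(lra) ltac:(lra).
  nra.
have e4 := twice (fun e => ln (1 - x e)) Hs.
have e5 := twice (fun e => ln (x e) + ln (1 - x e)) HM.
rewrite -/SL1 -/SML in e4 e5.
have e6 := SXQ; have e7 := SMQ HM; rewrite -/SXQ' in e6; rewrite -/SMQ' in e7.
have e8 : \big[Rplus/0]_(u in [set: V])
   ((ln (q u) * (1 - q u) - ln (q u) * INR #|nbr M u|) -
    / 2 * (\big[Rplus/0]_(v in nbr E u) ln (1 - x [set u; v]) -
           \big[Rplus/0]_(v in nbr M u) (ln (x [set u; v]) + ln (1 - x [set u; v]))))
   <= INR #|V|.
  rewrite -cardsT -[INR #|[set: V]|]Rmult_1_r -sumR_const.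
  apply: sumR_le => u _.
  have hv := vertex_bound u mM.
  have hk : INR #|nbr M u| <= 1 by apply: (le_INR _ 1); apply/leP; exact: matching_nbr.
  have hk0 := pos_INR #|nbr M u|.
  have := Hq u => hq.
  have hl := ln_nonpos (proj1 hq) (proj2 hq).
  have := xlnx_ge (proj1 hq).
  nra.
rewrite !sumR_sub sumR_mull sumR_sub -e6 -e7 -e4 -e5 in e8.
have -> : (INR #|M| - SX) * L = INR #|M| * L - SX * L by ring.
rewrite e1 e2; lra.
Qed.

End Bounds.


Section Cv.
Local Open Scope R_scope.

Lemma alg a b S T z : 0 < z -> 0 <= a -> 0 <= b -> 0 <= S - b -> 0 <= T - a ->
  a * (1 + S - b) = z -> b * (1 + T - a) = z ->
  a * b / (z + a * b) = b * / (1 + S) /\ 0 < a * b / (z + a * b) < 1 /\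
  (a * b / (z + a * b)) * (1 - a * b / (z + a * b)) = z * / (1 + S) * / (1 + T).
Proof.
move=> hz ha hb hS hT h1 h2.
have a0 : 0 < a by nra.
have b0 : 0 < b by nra.
have ex : a * b / (z + a * b) = b * / (1 + S).
  rewrite -h1; field; repeat split; nra.
split => //; rewrite ex; split.
  split; first by apply: Rmult_lt_0_compat; [lra | apply: Rinv_0_lt_compat; lra].
  apply: (Rmult_lt_reg_r (1 + S)); first lra.
  rewrite Rmult_assoc Rinv_l; lra.
have key : b * (1 + S - b) * (1 + T) = z * (1 + S).
  have e2 : b * (1 + T) = z + a * b by nra.
  have -> : b * (1 + S - b) * (1 + T) = (1 + S - b) * (b * (1 + T)) by ring.
  rewrite e2; nra.
field_simplify_eq; try lra.
Qed.

Lemma cv_ge0 (u : nat -> R) l : Un_cv u l -> (forall n, 0 <= u n) -> 0 <= l.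
Proof.
move=> h hp; apply: Rnot_lt_le => hl; case: (h (- l) ltac:(lra)) => N hN.
have := hN N (le_n N); rewrite /R_dist => /Rabs_def2 [h1 h2].
have := hp N; lra.
Qed.

Lemma cv_shift (u : nat -> R) l : Un_cv u l -> Un_cv (fun n => u (S n)) l.
Proof. move=> h e he; case: (h e he) => N hN; exists N => n hn; apply: hN; lia. Qed.

Lemma cv_const c : Un_cv (fun _ => c) c.
Proof. move=> e he; exists 0%nat => n _; rewrite /R_dist Rminus_diag Rabs_R0; lra. Qed.

End Cv.

Section LABP.
Local Open Scope R_scope.
Variables (V : finType) (E : {set {set V}}) (Hs : simple_graph E) (Y : V -> V -> R -> R).
Hypothesis HY : forall z : R, (0 < z)%R -> forall u v : V, [set u; v] \in E ->
          Un_cv (fun t => labp E z t u v) (Y u v z).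

Lemma labp_ge0 z : 0 <= z -> forall t u v, 0 <= labp E z t u v.
Proof.
move=> hz; elim => [|t IH] u v /=; first lra.
have := @sumR_ge0 _ (index_enum V) (fun w => w \in nbr E u :\ v) (fun w => labp E z t w u) (fun w _ => IH w u).
move=> h; rewrite /Rdiv; apply: Rmult_le_pos => //; apply: Rlt_le; apply: Rinv_0_lt_compat; lra.
Qed.

Variables (z : R) (hz : 0 < z).

Lemma adj_sym u v : [set u; v] \in E -> [set v; u] \in E.
Proof. by rewrite setUC. Qed.

Lemma Y_ge0 u v : [set u; v] \in E -> 0 <= Y u v z.
Proof. move=> uv; apply: cv_ge0 (HY hz uv) _ => n; apply: labp_ge0; lra. Qed.

Lemma fixp u v : [set u; v] \in E ->
  Y u v z * (1 + \big[Rplus/0]_(w in nbr E u :\ v) Y w u z) = z.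
Proof.
move=> uv.
have hw : forall w, w \in nbr E u :\ v -> Un_cv (fun t => labp E z t w u) (Y w u z).
  move=> w; rewrite !inE => /andP [_ wn]; apply: HY => //; exact: adj_sym.
have cvS := @sumR_cv _ (index_enum V) (fun w => w \in nbr E u :\ v)
   (fun t w => labp E z t w u) (fun w => Y w u z) hw.
have c1 := cv_shift (HY hz uv).
have pr := CV_mult _ _ _ _ c1 (CV_plus _ _ _ _ (cv_const 1) cvS).
apply: (UL_sequence _ _ _ pr).
apply: Un_cv_ext (cv_const z) => n /=.
have := @sumR_ge0 _ (index_enum V) (fun w => w \in nbr E u :\ v)
   (fun w => labp E z n w u) (fun w _ => labp_ge0 (Rlt_le _ _ hz) n w u).
move=> h; field; lra.
Qed.

Definition sY u := \big[Rplus/0]_(w in nbr E u) Y w u z.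

Lemma sY_ge0 u : 0 <= sY u.
Proof. apply: sumR_ge0 => w wn; apply: Y_ge0; apply: adj_sym; by move: wn; rewrite inE. Qed.

Lemma edge_data u v : [set u; v] \in E ->
  Y u v z * (1 + sY u - Y v u z) = z /\ 0 <= sY u - Y v u z.
Proof.
move=> uv; have vn : v \in nbr E u by rewrite inE.
have e : sY u = Y v u z + \big[Rplus/0]_(w in nbr E u :\ v) Y w u z.
  by rewrite /sY (big_setD1 _ vn).
have h0 : 0 <= \big[Rplus/0]_(w in nbr E u :\ v) Y w u z.
  apply: sumR_ge0 => w; rewrite !inE => /andP [_ wn]; apply: Y_ge0; exact: adj_sym.
split; last lra.
have -> : 1 + sY u - Y v u z = 1 + \big[Rplus/0]_(w in nbr E u :\ v) Y w u z by rewrite e; ring.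
exact: fixp.
Qed.

Lemma xval_edge u v : u != v ->
  xval Y z [set u; v] = Y u v z * Y v u z / (z + Y u v z * Y v u z).
Proof.
move=> uv; rewrite /xval; case: pickP => [u' | ]; last by move/(_ u); rewrite !inE eqxx.
rewrite !inE => /orP [] /eqP -> ; case: pickP => [v' | ].
- rewrite !inE => /andP [v'u /orP [] /eqP v'e]; first by rewrite v'e eqxx in v'u.
  by rewrite v'e.
- by move/(_ v); rewrite !inE eqxx orbT eq_sym uv.
- rewrite !inE => /andP [v'u /orP [] /eqP v'e]; last by rewrite v'e eqxx in v'u.
  by rewrite v'e Rmult_comm.
- by move/(_ u); rewrite !inE eqxx uv.
Qed.

Definition qY u := / (1 + sY u).

Lemma edge_props u v : [set u; v] \in E ->
  let x := xval Y z [set u; v] in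
  x = Y v u z * qY u /\ 0 < x < 1 /\ x * (1 - x) = z * qY u * qY v.
Proof.
move=> uv /=; rewrite xval_edge ?(edge_neq Hs uv) //.
have [h1 g1] := edge_data uv; have [h2 g2] := edge_data (adj_sym uv).
have := alg hz (Y_ge0 uv) (Y_ge0 (adj_sym uv)) g1 g2 h1 h2.
by rewrite /qY.
Qed.

End LABP.


Lemma disjP (T : finType) (A B : {set T}) :
  reflect (forall v, v \in A -> v \in B -> False) [disjoint A & B].
Proof.
rewrite -setI_eq0; apply: (iffP eqP) => [h v va vb | h].
  have : v \in A :&: B by rewrite inE va vb.
  by rewrite h inE.
apply/setP => v; rewrite !inE; apply/negP => /andP [va vb]; exact: h va vb.
Qed.

HB.instance Definition _ := SemiGroup.isComLaw.Build nat minn minnA minnC.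

Section Konig.
Variables (V : finType) (E : {set {set V}}) (Hs : simple_graph E).

Definition Nb (B S : {set V}) := [set v in B | [exists a in S, [set a; v] \in E]].

Lemma Nb_sub (B S : {set V}) : Nb B S \subset B.
Proof. by apply/subsetP => v; rewrite inE => /andP []. Qed.

Lemma Nb_in (B T S : {set V}) : T \subset S -> Nb (Nb B S) T = Nb B T.
Proof.
move=> /subsetP TS; apply/setP => v; rewrite !inE.
case: (v \in B) => //=; apply/andP/idP => [[_ h] // | h]; split => //.
case/exists_inP: h => a aT ae; apply/exists_inP; exists a => //; exact: TS.
Qed.

Lemma Nb_diff (B T S : {set V}) : Nb (B :\: S) T = Nb B T :\: S.
Proof. by apply/setP => v; rewrite !inE andbA. Qed.

Lemma Nb_union (B T S : {set V}) : Nb B (T :|: S) = Nb B T :|: Nb B S.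
Proof.
apply/setP => v; rewrite !inE; case: (v \in B) => //=.
apply/exists_inP/orP => [[a] | ].
  rewrite inE => /orP [] ha ea.
    by left; apply/exists_inP; exists a.
  by right; apply/exists_inP; exists a.
by case => /exists_inP [a ha ea]; exists a => //; rewrite inE ha ?orbT.
Qed.

Lemma Nb0 (B : {set V}) : Nb B set0 = set0.
Proof. by apply/setP => v; rewrite !inE; apply/negP => /andP [_ /exists_inP [a]]; rewrite inE. Qed.

Lemma matching0 : is_matching E set0.
Proof. by rewrite /is_matching sub0set; apply/forall_inP => e; rewrite inE. Qed.

Lemma matching1 e : e \in E -> is_matching E [set e].
Proof.
move=> eE; rewrite /is_matching sub1set eE /=.
apply/forall_inP => e1; rewrite inE => /eqP ->; apply/forall_inP => e2.
by rewrite inE => /eqP ->; rewrite eqxx.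
Qed.

Lemma match_union (M1 M2 : {set {set V}}) (X1 X2 : {set V}) : is_matching E M1 -> is_matching E M2 ->
  (forall e, e \in M1 -> e \subset X1) -> (forall e, e \in M2 -> e \subset X2) ->
  [disjoint X1 & X2] ->
  is_matching E (M1 :|: M2) /\ #|M1 :|: M2| = #|M1| + #|M2|.
Proof.
move=> /andP [s1 /forall_inP h1] /andP [s2 /forall_inP h2] x1 x2 /disjP dX.
have dis : forall e1 e2, e1 \in M1 -> e2 \in M2 -> [disjoint e1 & e2].
  move=> e1 e2 e1M e2M; apply/disjP => v v1 v2.
  by apply: (dX v); [apply: (subsetP (x1 _ e1M)) | apply: (subsetP (x2 _ e2M))].
split.
  rewrite /is_matching subUset s1 s2 /=.
  apply/forall_inP => e1; rewrite inE => /orP [] e1M; apply/forall_inP => e2;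
    rewrite inE => /orP [] e2M; apply/implyP => ne.
  - by move: (h1 _ e1M) => /forall_inP /(_ _ e2M) /implyP; apply.
  - exact: dis.
  - by rewrite disjoint_sym; apply: dis.
  - by move: (h2 _ e1M) => /forall_inP /(_ _ e2M) /implyP; apply.
have I0 : M1 :&: M2 = set0.
  apply/setP => e; rewrite !inE; apply/negP => /andP [e1 e2].
  have eE : e \in E by apply: (subsetP s1).
  have /card_gt0P [v ve] : (0 < #|e|)%N by rewrite Hs.
  by move/disjP: (dis _ _ e1 e2) => /(_ v ve ve).
by have := cardsUI M1 M2; rewrite I0 cards0 addn0.
Qed.

Lemma hall n : forall (A' B' : {set V}) (d : nat), (#|A'| <= n)%N -> [disjoint A' & B'] ->
  (forall S : {set V}, S \subset A' -> (#|S| <= #|Nb B' S| + d)%N) ->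
  exists M, [/\ is_matching E M, (forall e, e \in M -> e \subset A' :|: B') & (#|A'| <= #|M| + d)%N].
Proof.
elim: n => [|n IH] A' B' d hA hdis hH.
  exists set0; split; [exact: matching0 | by move=> e; rewrite inE | ].
  by move: hA; rewrite leqn0 => /eqP ->.
have [hAn|hAn] := leqP #|A'| n; first exact: IH.
have eA : #|A'| = n.+1 by apply/eqP; rewrite eqn_leq hA hAn.
move/disjP: (hdis) => hd.
case: (boolP [exists S : {set V}, [&& S \proper A', S != set0 & (#|Nb B' S| + d <= #|S|)%N]]).
- case/existsP => S /and3P [pS nS tS].
  have sS : S \subset A' by move: pS; rewrite properE => /andP [].
  have := hH S sS => tS'.
  have [M1 [m1 w1 c1]] : exists M, [/\ is_matching E M, (forall e, e \in M -> e \subset S :|: Nb B' S) & (#|S| <= #|M| + d)%N].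
    apply: IH.
    + by have := proper_card pS; rewrite eA ltnS.
    + apply/disjP => v vS vN; apply: (hd v); [exact: (subsetP sS) | exact: (subsetP (Nb_sub B' S))].
    + move=> T TS; rewrite Nb_in //; apply: hH; exact: subset_trans TS sS.
  have cS : (0 < #|S|)%N by rewrite card_gt0.
  have cD : #|A' :\: S| = (#|A'| - #|S|)%N by rewrite cardsD (setIidPr sS).
  have [M2 [m2 w2 c2]] : exists M, [/\ is_matching E M, (forall e, e \in M -> e \subset (A' :\: S) :|: (B' :\: Nb B' S)) & (#|A' :\: S| <= #|M| + 0)%N].
    apply: IH.
    + rewrite cD; have := subset_leq_card sS; lia.
    + apply/disjP => v; rewrite !inE => /andP [_ vA] /andP [_ vB]; exact: hd vA vB.
    + move=> T TS; rewrite Nb_diff.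
      have TS' : T \subset A' by apply: subset_trans TS (subsetDl _ _).
      have h := hH (T :|: S) ltac:(by rewrite subUset TS' sS).
      have dTS : T :&: S = set0.
        apply/setP => v; rewrite !inE; apply/negP => /andP [vT vS].
        by move: (subsetP TS v vT); rewrite inE vS.
      have := cardsUI T S; rewrite dTS cards0 addn0 => cTS.
      rewrite Nb_union in h.
      have := cardsID (Nb B' S) (Nb B' T :|: Nb B' S).
      have -> : (Nb B' T :|: Nb B' S) :&: Nb B' S = Nb B' S.
        by apply/setIidPr; apply: subsetUr.
      have -> : (Nb B' T :|: Nb B' S) :\: Nb B' S = Nb B' T :\: Nb B' S.
        by rewrite setDUl setDv setU0.
      lia.
  have dX : [disjoint S :|: Nb B' S & (A' :\: S) :|: (B' :\: Nb B' S)].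
    apply/disjP => v; rewrite inE => /orP [vS | vN]; rewrite inE => /orP [] ; rewrite inE => /andP [h1 h2].
    - by rewrite vS in h1.
    - exact: hd (subsetP sS v vS) h2.
    - exact: hd h2 (subsetP (Nb_sub B' S) v vN).
    - by rewrite vN in h1.
  have [mM cM] := match_union m1 m2 w1 w2 dX.
  exists (M1 :|: M2); split => //.
    move=> e; rewrite inE => /orP [] eM.
      apply: subset_trans (w1 _ eM) _; rewrite subUset; apply/andP; split.
        exact: subset_trans sS (subsetUl _ _).
      exact: subset_trans (Nb_sub _ _) (subsetUr _ _).
    apply: subset_trans (w2 _ eM) _; rewrite subUset; apply/andP; split.
      exact: subset_trans (subsetDl _ _) (subsetUl _ _).
    exact: subset_trans (subsetDl _ _) (subsetUr _ _).
  rewrite cM; have := subset_leq_card sS; lia.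
- rewrite negb_exists => /forallP hS.
  have strict : forall T : {set V}, T \subset A' -> T != set0 -> ~~ (A' \subset T) -> (#|T| < #|Nb B' T| + d)%N.
    move=> T TA Tn nAT; move: (hS T); rewrite properE TA nAT Tn /= -ltnNge; done.
  have /card_gt0P [a aA] : (0 < #|A'|)%N by rewrite eA.
  have cA : #|A'| = (#|A' :\ a| + 1)%N by rewrite (cardsD1 a A') aA addnC.
  have sub_a : forall T : {set V}, T \subset A' :\ a -> T != set0 -> (#|T| < #|Nb B' T| + d)%N.
    move=> T TA Tn; apply: strict => //.
      by apply: subset_trans TA (subsetDl _ _).
    apply/negP => /subsetP /(_ a aA) aT; by move: (subsetP TA a aT); rewrite !inE eqxx.
  case: (set_0Vmem (Nb B' [set a])) => [N0 | [b bN]].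
  + have := hH [set a]; rewrite sub1set aA N0 cards0 cards1 => /(_ isT) d1.
    have [M [m w c]] : exists M, [/\ is_matching E M, (forall e, e \in M -> e \subset (A' :\ a) :|: B') & (#|A' :\ a| <= #|M| + (d - 1))%N].
      apply: IH; first lia.
        apply/disjP => v; rewrite !inE => /andP [_ vA] vB; exact: hd vA vB.
      move=> T TA; case: (eqVneq T set0) => [-> | Tn]; first by rewrite cards0.
      have := sub_a T TA Tn; lia.
    exists M; split => //; last lia.
    move=> e eM; apply: subset_trans (w _ eM) _; apply: setSU; exact: subsetDl.
  + move: bN; rewrite inE => /andP [bB /exists_inP [a' ]]; rewrite inE => /eqP -> abE.
    have [M [m w c]] : exists M, [/\ is_matching E M, (forall e, e \in M -> e \subset (A' :\ a) :|: (B' :\ b)) & (#|A' :\ a| <= #|M| + d)%N].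
      apply: IH; first lia.
        apply/disjP => v; rewrite !inE => /andP [_ vA] /andP [_ vB]; exact: hd vA vB.
      move=> T TA; case: (eqVneq T set0) => [-> | Tn]; first by rewrite cards0.
      have := sub_a T TA Tn.
      rewrite Nb_diff; have := cardsD1 b (Nb B' T). case: (b \in Nb B' T) => /=; lia.
    have [mM cM] := match_union (matching1 abE) m (X1 := [set a; b]) (X2 := (A' :\ a) :|: (B' :\ b))
      ltac:(by move=> e; rewrite inE => /eqP ->) w ltac:(
      apply/disjP => v; rewrite !inE => /orP [] /eqP -> /orP [] /andP [];
        rewrite ?eqxx //; [move=> _ aB; exact: hd aA aB | move=> _ bA; exact: hd bA bB]).
    exists ([set [set a; b]] :|: M); split => //; last by rewrite cM cards1; lia.
    move=> e; rewrite inE => /orP [].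
      rewrite inE => /eqP ->; apply/subsetP => v; rewrite !inE => /orP [] /eqP ->;
        by rewrite ?aA ?bB ?orbT.
    move=> eM; apply: subset_trans (w _ eM) _; apply: setUSS; exact: subsetDl.
Qed.

Lemma konig : bipartite E ->
  exists C M, [/\ is_vertex_cover E C, is_matching E M & (#|C| <= #|M|)%N].
Proof.
case=> A hA.
pose f := fun S : {set V} => (#|A :\: S| + #|Nb (~: A) S|)%N.
have [S sA Smin] := @arg_minnP _ set0 (fun S => S \subset A) f (sub0set A).
set m := f S in Smin.
have mA : (m <= #|A|)%N.
  by have := Smin set0 (sub0set A); rewrite /f setD0 Nb0 cards0 addn0.
have [M [mM _ cM]] := @hall #|A| A (~: A) (#|A| - m) (leqnn _)
  ltac:(by apply/disjP => v vA; rewrite inE vA)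
  ltac:(move=> T TA; have := Smin T TA; rewrite /f cardsD (setIidPr TA);
        have := subset_leq_card TA; lia).
exists ((A :\: S) :|: Nb (~: A) S), M; split => //; last first.
  have := cardsUI (A :\: S) (Nb (~: A) S); rewrite /m /f in mA cM *; lia.
apply/forall_inP => e eE.
have /cards1P [a ha] : (#|e :&: A| == 1)%N by rewrite hA.
have : a \in e :&: A by rewrite ha inE.
rewrite inE => /andP [ae aA].
have [b bn ee] := edge_at Hs eE ae.
have bA : b \notin A.
  apply/negP => bA; have : b \in e :&: A by rewrite inE bA ee !inE eqxx orbT.
  rewrite ha inE => /eqP ba; move: (nbr_neq Hs bn); by rewrite ba eqxx.
have wit : forall w, w \in e -> w \in (A :\: S) :|: Nb (~: A) S -> ~~ [disjoint e & (A :\: S) :|: Nb (~: A) S].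
  by move=> w we wC; apply/negP => /disjP /(_ w we wC).
case aS: (a \in S).
  apply: (wit b); first by rewrite ee !inE eqxx orbT.
  rewrite !inE bA /=; apply/orP; right; apply/exists_inP; exists a => //.
  by move: bn; rewrite inE.
by apply: (wit a) => //; rewrite !inE aS aA.
Qed.

Lemma nu_ge M : is_matching E M -> (#|M| <= nu E)%N.
Proof. by move=> mM; apply: (leq_bigmax_cond (P := fun M => is_matching E M)). Qed.

Lemma nu_attained : exists M, is_matching E M /\ #|M| = nu E.
Proof.
rewrite /nu; apply: (big_ind (fun n => exists M, is_matching E M /\ #|M| = n)).
- by exists set0; rewrite cards0; split => //; apply: matching0.
- move=> x y [M1 [m1 c1]] [M2 [m2 c2]]; case: (leqP x y) => h.
    by exists M2; split => //; rewrite c2; apply/esym/maxn_idPr.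
  by exists M1; split => //; rewrite c1; apply/esym/maxn_idPl/ltnW.
- by move=> M mM; exists M.
Qed.

Lemma cover_T : is_vertex_cover E [set: V].
Proof.
apply/forall_inP => e eE; apply/negP => /disjP h.
have /card_gt0P [v ve] : (0 < #|e|)%N by rewrite Hs.
by apply: (h v ve); rewrite inE.
Qed.

Lemma tau_attained : exists C, is_vertex_cover E C /\ #|C| = tau E.
Proof.
rewrite /tau; apply: (big_ind (fun n => exists C, is_vertex_cover E C /\ #|C| = n)).
- by exists [set: V]; rewrite cardsT; split => //; apply: cover_T.
- move=> x y [M1 [m1 c1]] [M2 [m2 c2]]; case: (leqP x y) => h.
    by exists M1; split => //; rewrite c1; apply/esym/minn_idPl.
  by exists M2; split => //; rewrite c2; apply/esym/minn_idPr/ltnW.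
- by move=> M mM; exists M.
Qed.

Lemma tau_le C : is_vertex_cover E C -> (tau E <= #|C|)%N.
Proof.
move=> cC; rewrite /tau (bigD1 C) //=; exact: geq_minl.
Qed.

End Konig.


Section Final.
Local Open Scope R_scope.
Variables (V : finType) (E : {set {set V}}) (Hs : simple_graph E) (Y : V -> V -> R -> R).
Hypothesis HY : forall z : R, (0 < z)%R -> forall u v : V, [set u; v] \in E ->
          Un_cv (fun t => labp E z t u v) (Y u v z).

Lemma bounds z : 0 < z ->
  (forall M, is_matching E M ->
     (INR #|M| - \big[Rplus/0]_(e in E) xval Y z e) * ln z <= INR #|E| + INR #|V|) /\
  (forall C, is_vertex_cover E C -> \big[Rplus/0]_(e in E) xval Y z e <= INR #|C|).
Proof.
move=> hz.
have Hq : forall u, 0 < qY E Y z u <= 1.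
  move=> u; have := sY_ge0 HY hz u; rewrite /qY => h; split.
    apply: Rinv_0_lt_compat; lra.
  apply: (Rmult_le_reg_r (1 + sY E Y z u)); first lra.
  rewrite Rinv_l; lra.
have Hx : forall e, e \in E -> 0 < xval Y z e < 1.
  move=> e eE; have /cards2P [a [b [ab ee]]] : (#|e| == 2)%nat by rewrite Hs.
  rewrite ee in eE *; by have [_ [h _]] := edge_props Hs HY hz eE.
have Hxq : forall u v, [set u; v] \in E ->
    xval Y z [set u; v] * (1 - xval Y z [set u; v]) = z * qY E Y z u * qY E Y z v.
  by move=> u v uv; have [_ [_ h]] := edge_props Hs HY hz uv.
have Hsum : forall u, \big[Rplus/0]_(v in nbr E u) xval Y z [set u; v] = 1 - qY E Y z u.
  move=> u.
  transitivity (\big[Rplus/0]_(v in nbr E u) (qY E Y z u * Y v u z)).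
    apply: eq_bigr => v; rewrite inE => uv; have [h _] := edge_props Hs HY hz uv.
    by rewrite h Rmult_comm.
  rewrite sumR_mull -/(sY E Y z u) /qY; have := sY_ge0 HY hz u => h; field; lra.
split.
  by move=> M mM; apply: (matching_bound Hs hz Hq Hx Hxq Hsum mM).
by move=> C cC; apply: (cover_bound Hs Hq Hx Hsum cC).
Qed.

End Final.

Theorem mainTheorem4 (V : finType) (E : {set {set V}})
  (Hsimple : simple_graph E) (Hbip : bipartite E)
  (Y : V -> V -> R -> R)
  (HY : forall z : R, (0 < z)%R -> forall u v : V, [set u; v] \in E ->
          Un_cv (fun t => labp E z t u v) (Y u v z)) :
  (forall eps : R, (eps > 0)%R -> exists M : R, forall z : R, (z > M)%R ->
     (Rabs (\big[Rplus/0%R]_(e in E) xval Y z e - INR (nu E)) < eps)%R)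
  /\ nu E = tau E.
Proof.
have [M0 [mM0 cM0]] := nu_attained E.
have [C0 [cC0 cC0']] := tau_attained Hsimple.
have [C1 [M1 [cC1 mM1 le1]]] := konig Hsimple Hbip.
have tn : (tau E <= nu E)%nat.
  apply: leq_trans (tau_le cC1) _; apply: leq_trans le1 _; exact: nu_ge.
set K := (INR #|E| + INR #|V|)%R.
have K0 : (0 <= K)%R by rewrite /K; have := pos_INR #|E|; have := pos_INR #|V|; lra.
have key : forall z, (0 < z)%R ->
   ((INR (nu E) - \big[Rplus/0%R]_(e in E) xval Y z e) * ln z <= K /\
    \big[Rplus/0%R]_(e in E) xval Y z e <= INR (tau E))%R.
  move=> z hz; have [h1 h2] := bounds Hsimple HY hz.
  by split; [rewrite -cM0; apply: h1 | rewrite -cC0'; apply: h2].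
have nt : (nu E <= tau E)%nat.
  have hz : (0 < exp (K + 1))%R by apply: exp_pos.
  have [h1 h2] := key _ hz; rewrite ln_exp in h1.
  have : (INR (nu E) < INR (tau E) + 1)%R by nra.
  rewrite -S_INR => /INR_lt; lia.
have eq : nu E = tau E by apply/eqP; rewrite eqn_leq nt tn.
split => //.
move=> eps heps; exists (exp (K / eps)) => z hz.
have zpos : (0 < z)%R by have := exp_pos (K / eps); lra.
have lnz : (K / eps < ln z)%R by rewrite -[X in (X < _)%R]ln_exp; apply: ln_increasing => //; apply: exp_pos.
have Kl : (K < eps * ln z)%R.
  have : (K / eps * eps < ln z * eps)%R by apply: Rmult_lt_compat_r.
  rewrite /Rdiv Rmult_assoc Rinv_l; lra.
have [h1 h2] := key z zpos; rewrite -eq in h2.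
have lpos : (0 < ln z)%R.
  have : (0 <= K / eps)%R by apply: Rmult_le_pos; [lra | apply: Rlt_le; apply: Rinv_0_lt_compat; lra].
  lra.
apply: Rabs_def1; first lra.
nra.
Qed.
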